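(* The expected number of C3's (directed 3-cycles on three distinct vertices, counted up to cyclic rotation) in the OSW graph $G_n$ is $\Theta(n^2)$.
   Context: For an integer $n\ge1$, the $n$-octahedral graph $G'_n=(V,E')$ is the undirected graph with vertex set $V=\{u\in\mathbb{Z}^3:|u_1|+|u_2|+|u_3|=n\}$ and edge set $E'=\{\{v,w\}\subset V: v\neq w,\ |v_i-w_i|\le 1 \text{ for all } i=1,2,3\}$. For $u,v\in V$, $d_{uv}$ denotes the shortest-path distance in $G'_n$, and $Z_u=\left(\sum_{w\in V\setminus\{u\}} d_{uw}^{-2}\right)^{-1}$. The OSW random graph $G_n=(V,E)$ is the directed graph in which, for every $\{u,v\}\in E'$, both $(u,v),(v,u)\in E$, and in addition each vertex $u\in V$, independently of the others, chooses one vertex $v\in V\setminus\{u\}$ with probability $Z_u d_{uv}^{-2}$ and the long-range edge $(u,v)$ is added to $E$. *)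

(* Defs.v *)
From HB Require Import structures.
From mathcomp Require Import all_boot all_order all_algebra.
Set Implicit Arguments. Unset Strict Implicit. Unset Printing Implicit Defensive.
Import Order.TTheory GRing.Theory Num.Theory.
Local Open Scope ring_scope.

(* Points of Z^3 with coordinates in [-n, n], encoded by ordinals i |-> i - n. *)
Definition pt (n : nat) : Type := ('I_(2 * n + 1) * 'I_(2 * n + 1) * 'I_(2 * n + 1))%type.

Definition crd (n : nat) (i : 'I_(2 * n + 1)) : int := (i : nat)%:Z - n%:Z.

Definition c1 n (p : pt n) : int := crd p.1.1.
Definition c2 n (p : pt n) : int := crd p.1.2.
Definition c3 n (p : pt n) : int := crd p.2.

Definition onV (n : nat) (p : pt n) : bool :=
  (absz (c1 p) + absz (c2 p) + absz (c3 p) == n)%N.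

Definition V (n : nat) : finType := {p : pt n | onV p}.

Definition adj (n : nat) (v w : V n) : bool :=
  [&& v != w,
      `|c1 (val v) - c1 (val w)| <= 1,
      `|c2 (val v) - c2 (val w)| <= 1 &
      `|c3 (val v) - c3 (val w)| <= 1].

Definition ball (n k : nat) (u : V n) : {set V n} :=
  iter k (fun S : {set V n} => S :|: [set w | [exists v in S, adj v w]]) [set u].

(* shortest-path distance d_uv in G'_n (the graph is connected, so the least
   k < #|V n| with v in ball k u exists) *)
Definition dist (n : nat) (u v : V n) : nat :=
  find (fun k => v \in ball k u) (iota 0 #|V n|).

Definition Zc (n : nat) (u : V n) : rat :=
  (\sum_(w : V n | w != u) ((dist u w)%:R ^- 2))^-1.

Definition prob (n : nat) (u v : V n) : rat :=
  if v == u then 0 else Zc u * ((dist u v)%:R ^- 2).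

(* directed edge set E of G_n given the long-range choices f *)
Definition edgeE (n : nat) (f : {ffun V n -> V n}) (a b : V n) : bool :=
  adj a b || (f a == b).

Definition numC3 (n : nat) (f : {ffun V n -> V n}) : rat :=
  (#|[set t : V n * V n * V n |
        [&& t.1.1 != t.1.2, t.1.2 != t.2, t.2 != t.1.1,
            edgeE f t.1.1 t.1.2, edgeE f t.1.2 t.2 & edgeE f t.2 t.1.1]]|)%:R / 3.

(* expected number of C3's in G_n: average over independent choices *)
Definition expectedC3 (n : nat) : rat :=
  \sum_(f : {ffun V n -> V n}) (\prod_(u : V n) prob u (f u)) * numC3 f.

(* Main.v *)
Require Import Defs.
From HB Require Import structures.
From mathcomp Require Import all_boot all_order all_algebra.
From mathcomp Require Import zify ring lra.
Import Order.TTheory GRing.Theory Num.Theory.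
Local Open Scope ring_scope.
Set Implicit Arguments. Unset Strict Implicit.

Lemma pos21 (n : nat) : (0 < 2*n+1)%N. Proof. by rewrite addn1. Qed.
Definition o (n k : nat) : 'I_(2*n+1) := Ordinal (ltn_pmod k (pos21 n)).
Lemma crd_o n k : (k < 2*n+1)%N -> crd (o n k) = k%:Z - n%:Z.
Proof. by move=> h; rewrite /crd /= modn_small. Qed.
Lemma crdE n (i : 'I_(2*n+1)) : crd i = (i : nat)%:Z - n%:Z. Proof. by []. Qed.
Definition ptk n a b c : pt n := (o n a, o n b, o n c).

Lemma onV_ptk n a b c : (a < 2*n+1)%N -> (b < 2*n+1)%N -> (c < 2*n+1)%N ->
  (absz (a%:Z - n%:Z) + absz (b%:Z - n%:Z) + absz (c%:Z - n%:Z) = n)%N ->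
  onV (ptk n a b c).
Proof.
move=> ha hb hc h; rewrite /onV /c1 /c2 /c3 /ptk /= !crd_o //; exact/eqP.
Qed.

Lemma onV0 n : onV (ptk n (2*n) n n).
Proof. apply: onV_ptk; lia. Qed.
Definition v0 n : V n := exist (fun p : pt n => onV p) _ (onV0 n).
Definition mk n a b c : V n := insubd (v0 n) (ptk n a b c).

Lemma mkE n a b c : (a < 2*n+1)%N -> (b < 2*n+1)%N -> (c < 2*n+1)%N ->
  (absz (a%:Z - n%:Z) + absz (b%:Z - n%:Z) + absz (c%:Z - n%:Z) = n)%N ->
  [/\ c1 (val (mk n a b c)) = a%:Z - n%:Z, c2 (val (mk n a b c)) = b%:Z - n%:Z
    & c3 (val (mk n a b c)) = c%:Z - n%:Z].
Proof.
move=> ha hb hc h; rewrite /mk insubdK; last exact: onV_ptk.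
by rewrite /c1 /c2 /c3 /= !crd_o.
Qed.

Lemma neq_c n (v w : V n) :
  (c1 (val v) != c1 (val w)) || (c2 (val v) != c2 (val w)) -> v != w.
Proof. by apply: contraTneq => ->; rewrite !eqxx. Qed.


Definition Tri n (f : {ffun V n -> V n}) : {set V n * V n * V n} :=
  [set t : V n * V n * V n |
        [&& t.1.1 != t.1.2, t.1.2 != t.2, t.2 != t.1.1,
            edgeE f t.1.1 t.1.2, edgeE f t.1.2 t.2 & edgeE f t.2 t.1.1]].

Lemma numC3E (n : nat) (f : {ffun V n -> V n}) : numC3 f = (#|Tri f|)%:R / 3. Proof. by []. Qed.

Definition TT n (p : 'I_(n./2) * 'I_(n./2)) : V n * V n * V n :=
  let x := p.1.+1 in let y := (p.2 : nat) in let z := (n - x - y)%N in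
  (mk n (n + x) (n + y) (n + z), mk n (n + x - 1) (n + y + 1) (n + z),
   mk n (n + x - 1) (n + y) (n + z + 1)).

Lemma lower_tri (n : nat) (f : {ffun V n -> V n}) : ((n./2) ^ 2 <= #|Tri f|)%N.
Proof.
have hm : (n./2 + n./2 <= n)%N by rewrite -{3}(odd_double_half n) addnn leq_addl.
have TTin : forall p, TT p \in Tri f.
  move=> [i j]; have hi := ltn_ord i; have hj := ltn_ord j.
  rewrite /TT /= inE /=.
  set x := i.+1; set y := (j : nat).
  have [A1 A2 A3] := @mkE n (n + x) (n + y) (n + (n - x - y)) ltac:(lia) ltac:(lia) ltac:(lia) ltac:(lia).
  have [B1 B2 B3] := @mkE n (n + x - 1) (n + y + 1) (n + (n - x - y)) ltac:(lia) ltac:(lia) ltac:(lia) ltac:(lia).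
  have [C1 C2 C3] := @mkE n (n + x - 1) (n + y) (n + (n - x - y) + 1) ltac:(lia) ltac:(lia) ltac:(lia) ltac:(lia).
  rewrite /edgeE /adj.
  have N1 : forall (P : bool) (a b : int), a <> b -> (a != b) || P by move=> P a b /eqP ->.
  have N2 : forall (P : bool) (a b : int), a <> b -> P || (a != b) by move=> P a b /eqP ->; rewrite orbT.
  apply/andP; split; [|apply/andP; split; [|apply/andP; split; [|apply/andP; split; [|apply/andP; split]]]].
  - apply: neq_c; rewrite A1 B1; apply: N1; lia.
  - apply: neq_c; rewrite B2 C2; apply: N2; lia.
  - apply: neq_c; rewrite C1 A1; apply: N1; lia.
  - apply/orP; left; apply/and4P; split; [apply: neq_c; rewrite A1 B1; apply: N1|
      rewrite A1 B1| rewrite A2 B2| rewrite A3 B3]; lia.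
  - apply/orP; left; apply/and4P; split; [apply: neq_c; rewrite B2 C2; apply: N2|
      rewrite B1 C1| rewrite B2 C2| rewrite B3 C3]; lia.
  - apply/orP; left; apply/and4P; split; [apply: neq_c; rewrite C1 A1; apply: N1|
      rewrite C1 A1| rewrite C2 A2| rewrite C3 A3]; lia.
have TTinj : injective (@TT n).
  move=> [i j] [i' j'] /(congr1 (fun t => (c1 (val t.1.1), c2 (val t.1.1)))).
  rewrite /TT /=.
  have hi := ltn_ord i; have hj := ltn_ord j; have hi' := ltn_ord i'; have hj' := ltn_ord j'.
  have [A1 A2 _] := @mkE n (n + i.+1) (n + j) (n + (n - i.+1 - j)) ltac:(lia) ltac:(lia) ltac:(lia) ltac:(lia).
  have [B1 B2 _] := @mkE n (n + i'.+1) (n + j') (n + (n - i'.+1 - j')) ltac:(lia) ltac:(lia) ltac:(lia) ltac:(lia).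
  rewrite A1 A2 B1 B2 => -[E1 E2].
  by congr (_, _); apply: val_inj => /=; lia.
have -> : ((n./2) ^ 2 = #|[set TT p | p in [set: 'I_(n./2) * 'I_(n./2)]]|)%N.
  by rewrite card_imset // cardsT card_prod card_ord.
apply: subset_leq_card; apply/subsetP => t /imsetP [p _ ->]; exact: TTin.
Qed.

Lemma crd_inj (n : nat) (i j : 'I_(2*n+1)) : crd i = crd j -> i = j.
Proof. rewrite !crdE => h; apply: val_inj => /=; lia. Qed.

Definition cd (n : nat) (i j : 'I_(2*n+1)) : 'I_3 := inord (j.+1 - i).

Lemma cd_inj (n : nat) (i j j' : 'I_(2*n+1)) :
  `|crd i - crd j| <= 1 -> `|crd i - crd j'| <= 1 -> cd i j = cd i j' -> j = j'.
Proof.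
rewrite !crdE => h1 h2 /(congr1 val) /=.
rewrite !inordK; [|lia|lia] => h; apply: val_inj => /=; lia.
Qed.

Definition code (n : nat) (f : {ffun V n -> V n}) (a b : V n) :
  option ('I_3 * 'I_3 * 'I_3) :=
  if f a == b then None
  else Some (cd (val a).1.1 (val b).1.1, cd (val a).1.2 (val b).1.2, cd (val a).2 (val b).2).

Lemma pt_eq (n : nat) (p q : pt n) : p.1.1 = q.1.1 -> p.1.2 = q.1.2 -> p.2 = q.2 -> p = q.
Proof. by move: p q => [[? ?] ?] [[? ?] ?] /= -> -> ->. Qed.

Lemma code_inj (n : nat) (f : {ffun V n -> V n}) (a b b' : V n) :
  edgeE f a b -> edgeE f a b' -> code f a b = code f a b' -> b = b'.
Proof.
rewrite /edgeE /code /adj.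
move=> hb hb'; case E: (f a == b); case E': (f a == b') => //.
- by move=> _; rewrite -(eqP E) (eqP E').
move: hb hb'; rewrite E E' !orbF.
move=> /and4P[_ x1 y1 z1] /and4P[_ x2 y2 z2] [e1 e2 e3].
have r1 := cd_inj x1 x2 e1; have r2 := cd_inj y1 y2 e2; have r3 := cd_inj z1 z2 e3.
by apply: val_inj; apply: pt_eq.
Qed.

Lemma upper_tri (n : nat) (f : {ffun V n -> V n}) :
  (#|Tri f| <= #|V n| * 28 * 28)%N.
Proof.
pose h (t : V n * V n * V n) := (t.1.1, code f t.1.1 t.1.2, code f t.1.2 t.2).
have hinj : {in Tri f &, injective h}.
  move=> [[a b] c] [[a' b'] c']; rewrite !inE /= /h /=.
  move=> /and5P[_ _ _ e1 /andP[e2 _]] /and5P[_ _ _ e1' /andP[e2' _]] [ea eb ec].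
  subst a'; have eb' := code_inj e1 e1' eb; subst b'.
  by rewrite (code_inj e2 e2' ec).
rewrite -(card_in_imset hinj).
apply: leq_trans (max_card _) _.
by rewrite !card_prod !card_option !card_prod !card_ord.
Qed.

Lemma cardV (n : nat) : (#|V n| <= 2 * (2 * n + 1) ^ 2)%N.
Proof.
pose h (v : V n) := ((val v).1.1, (val v).1.2, (0 <= c3 (val v))).
have hinj : injective h.
  move=> [[[x y] z] hv] [[[x' y'] z'] hv']; rewrite /h /= => -[ex ey es].
  subst x' y'; apply: val_inj => /=; congr (_, _); apply: crd_inj.
  move: hv hv' es; rewrite /onV /c1 /c2 /c3 /= => /eqP hv /eqP hv'.
  case: (lerP 0 (crd z)) => h1; case: (lerP 0 (crd z')) => h2 //= _; lia.
rewrite -(card_image hinj).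
apply: leq_trans (max_card _) _.
by rewrite !card_prod !card_ord card_bool mulnC.
Qed.

Lemma dist_pos (n : nat) (u w : V n) : w != u -> (0 < dist u w)%N.
Proof.
move=> hw; rewrite /dist.
have : (0 < #|V n|)%N by apply/card_gt0P; exists u.
case: #|V n| => [//|k] _ /=.
by rewrite /ball /= inE (negbTE hw).
Qed.

Lemma other (n : nat) (u : V n) : (0 < n)%N -> exists w : V n, w != u.
Proof.
move=> n0.
have [A1 _ _] := @mkE n (2 * n) n n ltac:(lia) ltac:(lia) ltac:(lia) ltac:(lia).
have [B1 _ _] := @mkE n 0 n n ltac:(lia) ltac:(lia) ltac:(lia) ltac:(lia).
have d : mk n (2 * n) n n != mk n 0 n n.
  apply: neq_c; rewrite A1 B1; apply/orP; left; apply/eqP; lia.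
case: (eqVneq u (mk n (2 * n) n n)) => [e|ne].
  by exists (mk n 0 n n); rewrite e eq_sym.
by exists (mk n (2 * n) n n); rewrite eq_sym.
Qed.

Lemma prob_ge0 (n : nat) (u v : V n) : 0 <= prob u v.
Proof.
rewrite /prob; case: eqP => // _; apply: mulr_ge0; last by rewrite invr_ge0 exprn_ge0.
rewrite /Zc invr_ge0; apply: sumr_ge0 => w _; by rewrite invr_ge0 exprn_ge0.
Qed.

Lemma prob_sum (n : nat) (u : V n) : (0 < n)%N -> \sum_v prob u v = 1.
Proof.
move=> n0.
rewrite (bigD1 u) //= /prob eqxx add0r.
rewrite (eq_bigr (fun v => Zc u * ((dist u v)%:R ^- 2))); last first.
  by move=> v /negbTE ->.
rewrite -big_distrr /= /Zc mulVf //.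
have [w hw] := other u n0.
rewrite (bigD1 w) //= lt0r_neq0 // ltr_wpDr //.
  by apply: sumr_ge0 => v _; rewrite invr_ge0 exprn_ge0.
by rewrite invr_gt0 exprn_gt0 // ltr0n dist_pos.
Qed.

Lemma wsum (n : nat) : (0 < n)%N ->
  \sum_(f : {ffun V n -> V n}) \prod_(u : V n) prob u (f u) = 1.
Proof.
move=> n0; rewrite -bigA_distr_bigA /=.
by rewrite big1 // => u _; rewrite prob_sum.
Qed.

Lemma expect_bounds (n : nat) (L U : rat) : (0 < n)%N ->
  (forall f : {ffun V n -> V n}, L <= numC3 f <= U) -> L <= expectedC3 n <= U.
Proof.
move=> n0 h; rewrite /expectedC3.
have w0 : forall f : {ffun V n -> V n}, 0 <= \prod_(u : V n) prob u (f u).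
  by move=> f; apply: prodr_ge0 => u _; apply: prob_ge0.
apply/andP; split.
  have EL : L = (\sum_(f : {ffun V n -> V n}) \prod_(u : V n) prob u (f u)) * L by rewrite wsum // mul1r.
  rewrite {1}EL big_distrl /=.
  apply: ler_sum => f _; have [h1 h2] := andP (h f); exact: (ler_wpM2l (w0 f) h1).
have EU : U = (\sum_(f : {ffun V n -> V n}) \prod_(u : V n) prob u (f u)) * U by rewrite wsum // mul1r.
rewrite [X in _ <= X]EU big_distrl /=.
apply: ler_sum => f _; have [h1 h2] := andP (h f); exact: (ler_wpM2l (w0 f) h2).
Qed.

Theorem corollary1 :
  exists (a b : rat), 0 < a /\ 0 < b /\
    exists N : nat, forall n : nat, (N <= n)%N ->
      a * (n%:R ^+ 2) <= expectedC3 n /\ expectedC3 n <= b * (n%:R ^+ 2).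
Proof.
exists (1 / 48), 14112; split => //; split => //; exists 2%N => n n2.
apply/andP; apply: expect_bounds; first lia.
move=> f; rewrite numC3E.
have lo := lower_tri f; have up := upper_tri f; have cv := cardV n.
have hm : (n <= n./2 + n./2 + 1)%N.
  by rewrite -{1}(odd_double_half n) -addnn addnC leq_add2l leq_b1.
move: lo hm; set m := n./2 => lo hm.
have h3 : (n <= 3 * m)%N by lia.
have h4 : (n ^ 2 <= (3 * m) ^ 2)%N by rewrite leq_exp2r.
have L1 : (n ^ 2 <= 16 * #|Tri f|)%N by lia.
have h5 : ((2 * n + 1) ^ 2 <= (3 * n) ^ 2)%N by rewrite leq_exp2r //; lia.
have U1 : (#|Tri f| <= 18 * 28 * 28 * n ^ 2)%N.
  rewrite expnMn in h5.
  rewrite [(3 ^ 2)%N]/(3 ^ 2)%N /= in h5.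
  move: up cv h5; move: (#|V n|) ((2 * n + 1) ^ 2)%N (n ^ 2)%N => cV X Y a b c; lia.
have L2 : (n ^ 2)%:R <= 16 * (#|Tri f|)%:R :> rat.
  by rewrite -(natrM _ 16) ler_nat.
have U2 : (#|Tri f|)%:R <= (18 * 28 * 28 * n ^ 2)%:R :> rat by rewrite ler_nat.
rewrite !natrM in U2.
rewrite natrX in L2 U2.
apply/andP; split; lra.
Qed.
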